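(* Let $n\ge 1$ and let $\rho$ be a representation of $A_n$ over a set $U$. Then the graph on $U$ whose edges are the pairs $\{x,y\}$ with $(x,y)\in\rho(r)$ contains a clique of size $n^2$.
   Context: For $n\ge 1$, $A_n$ denotes the finite integral symmetric relation algebra with atoms $1'$, $r$, $b_1,\dots,b_n$, all symmetric, in which a diversity cycle $xyz$ is mandatory (i.e. $x;y\ge z$) if and only if it involves $r$, and forbidden (i.e. $x;y\cdot z=0$) otherwise. A representation over a set $U$ is an embedding $\rho$ into the full relation algebra $\langle\mathcal P(U\times U),\cup,{}^c,\circ,{}^{-1},\mathrm{Id}_U\rangle$. *)

(* Defs.v *)
From mathcomp Require Import all_boot.
Set Implicit Arguments. Unset Strict Implicit. Unset Printing Implicit Defensive.

(* Atoms of A_n: None = 1' (identity), Some None = r, Some (Some i) = b_i. *)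
Definition atom (n : nat) : finType := option (option 'I_n).
Definition aId {n} : atom n := None.
Definition aR {n} : atom n := Some None.
Definition aB {n} (i : 'I_n) : atom n := Some (Some i).

Definition An (n : nat) := {set atom n}.

(* z <= x ; y for atoms x, y, z.  All atoms are symmetric; a diversity cycle
   xyz is allowed (mandatory) iff it involves r, forbidden otherwise. *)
Definition atom_le_comp {n} (x y z : atom n) : bool :=
  match x, y with
  | None, _ => z == y
  | _, None => z == x
  | Some _, Some _ =>
      match z with
      | None => x == y
      | Some _ => [|| x == aR, y == aR | z == aR]
      end
  end.

Definition atom_comp {n} (x y : atom n) : An n := [set z | atom_le_comp x y z].

(* Operations of A_n (complete atomic: composition distributes over joins). *)
Definition An_join {n} (A B : An n) : An n := A :|: B.
Definition An_compl {n} (A : An n) : An n := ~: A.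
Definition An_comp {n} (A B : An n) : An n :=
  \bigcup_(a in A) \bigcup_(b in B) atom_comp a b.
Definition An_conv {n} (A : An n) : An n := A.   (* all atoms symmetric *)
Definition An_one {n} : An n := [set aId].

(* A representation of A_n over U: an embedding into the full relation
   algebra on U (relations as U -> U -> Prop, equality = extensional). *)
Definition is_representation (n : nat) (U : Type) (rho : An n -> U -> U -> Prop) : Prop :=
  (forall A B, (forall x y, rho A x y <-> rho B x y) -> A = B) /\
  [/\       (forall A B x y, rho (An_join A B) x y <-> (rho A x y \/ rho B x y)),
      (forall A x y, rho (An_compl A) x y <-> ~ rho A x y),
      (forall A B x y, rho (An_comp A B) x y <-> exists z, rho A x z /\ rho B z y),
      (forall A x y, rho (An_conv A) x y <-> rho A y x)
    & (forall x y, rho An_one x y <-> x = y)].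

(* Main.v *)
Require Import Defs.
From mathcomp Require Import all_boot.
From Stdlib Require Import Classical ClassicalEpsilon.
Set Implicit Arguments.

Section S.
Variables (n : nat) (U : Type) (rho : An n -> U -> U -> Prop).
Hypothesis Hr : is_representation rho.

Lemma rho_setT x y : rho setT x y.
Proof.
case: Hr => _ [Hj Hc _ _ _].
have -> : (setT : An n) = An_join [set: atom n] (An_compl setT).
  by rewrite /An_join /An_compl setUCr.
apply/Hj; case: (classic (rho setT x y)) => h; [by left | by right; apply/Hc].
Qed.

Lemma rho_set0 {x y} : ~ rho set0 x y.
Proof.
case: Hr => _ [Hj Hc _ _ _].
have -> : (set0 : An n) = An_compl setT by rewrite /An_compl setCT.
by move/Hc; apply; apply: rho_setT.
Qed.

Lemma rho_mono {A B : An n} {x y} : A \subset B -> rho A x y -> rho B x y.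
Proof.
case: Hr => _ [Hj _ _ _ _] sAB HA.
have -> : B = An_join A B by rewrite /An_join; apply/esym/setUidPr.
by apply/Hj; left.
Qed.

Lemma rho_nonempty (A : An n) : A != set0 -> exists x y, rho A x y.
Proof.
move=> nA; apply: NNPP => H; move/eqP: nA; apply.
case: (Hr) => Hi _; apply: Hi => x y; split => h.
- by exfalso; apply: H; exists x, y.
- exfalso; exact: (rho_set0 h).
Qed.

Lemma rho_disj {a b : atom n} {x y} : a != b -> rho [set a] x y -> ~ rho [set b] x y.
Proof.
case: Hr => _ [_ Hc _ _ _] nab Ha.
have : rho (An_compl [set b]) x y.
  apply: (rho_mono _ Ha); apply/subsetP => z; rewrite /An_compl !inE => /eqP ->.
  exact: nab.
move=> H; exact: (proj1 (Hc _ _ _) H).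
Qed.

Lemma rho_comp1 {a b : atom n} {x y z} : rho [set a] x z -> rho [set b] z y ->
  rho (atom_comp a b) x y.
Proof.
case: Hr => _ [_ _ Hm _ _] h1 h2.
have : rho (An_comp [set a] [set b]) x y by apply/Hm; exists z.
apply: rho_mono; apply/subsetP => c /bigcupP [a' ]; rewrite inE => /eqP -> /bigcupP [b'].
by rewrite inE => /eqP ->.
Qed.

End S.

Theorem mainTheorem9 (n : nat) (U : Type) (rho : An n -> U -> U -> Prop) :
  0 < n -> is_representation rho ->
  exists f : 'I_(n ^ 2) -> U,
    injective f /\
    (forall i j : 'I_(n ^ 2), i != j -> rho [set aR] (f i) (f j)).
Proof.
case: n rho => [//|m] rho _ Hr.
have [x0 [v Hxv]] : exists x y, rho [set aR] x y.
  by apply: rho_nonempty => //; apply/set0Pn; exists aR; rewrite inE.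
have Hw : forall i k : 'I_m.+1, exists w, rho [set aB i] x0 w /\ rho [set aB k] w v.
  move=> i k; case: (Hr) => _ [_ _ Hm _ _].
  have : rho (An_comp [set aB i] [set aB k]) x0 v.
    apply: (rho_mono Hr _ Hxv); apply/subsetP => c; rewrite inE => /eqP ->.
    apply/bigcupP; exists (aB i); rewrite ?inE //.
    by apply/bigcupP; exists (aB k); rewrite ?inE //.
  by move/Hm.
pose g i k := proj1_sig (constructive_indefinite_description _ (Hw i k)).
have gP i k : rho [set aB i] x0 (g i k) /\ rho [set aB k] (g i k) v.
  exact: proj2_sig (constructive_indefinite_description _ (Hw i k)).
pose f (j : 'I_(m.+1 ^ 2)) := g (inord (j %/ m.+1)) (inord (j %% m.+1)).
have finj : injective f.
  move=> j j' E.
  have [h1 h2] := gP (inord (j %/ m.+1)) (inord (j %% m.+1)).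
  have [h1' h2'] := gP (inord (j' %/ m.+1)) (inord (j' %% m.+1)).
  rewrite -/(f j) in h1 h2; rewrite -/(f j') -E in h1' h2'.
  have eq1 : (inord (j %/ m.+1) : 'I_m.+1) = inord (j' %/ m.+1).
    apply/eqP; apply/negPn/negP => ne; apply: (rho_disj Hr _ h1 h1').
    by apply: contra ne => /eqP [->].
  have eq2 : (inord (j %% m.+1) : 'I_m.+1) = inord (j' %% m.+1).
    apply/eqP; apply/negPn/negP => ne; apply: (rho_disj Hr _ h2 h2').
    by apply: contra ne => /eqP [->].
  have lt q : (q : 'I_(m.+1 ^ 2)) %/ m.+1 < m.+1.
    by rewrite ltn_divLR // mulnn.
  have lt2 q : (q : 'I_(m.+1 ^ 2)) %% m.+1 < m.+1 by rewrite ltn_mod.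
  move: (congr1 val eq1) (congr1 val eq2); rewrite /= !inordK // => e1 e2.
  by apply/val_inj; rewrite /= (divn_eq j m.+1) (divn_eq j' m.+1) e1 e2.
exists f; split => // j j' ne.
have fne : f j <> f j' by move/finj => E; rewrite E eqxx in ne.
have [h1 _] := gP (inord (j %/ m.+1)) (inord (j %% m.+1)).
have [h1' _] := gP (inord (j' %/ m.+1)) (inord (j' %% m.+1)).
rewrite -/(f j) in h1; rewrite -/(f j') in h1'.
case: (Hr) => _ [Hj _ _ Hcv Hone].
have h1c := proj1 (Hcv _ _ _) h1.
have hc := rho_comp1 Hr h1c h1'.
have : rho (An_join [set aId] [set aR]) (f j) (f j').
  apply: (rho_mono Hr _ hc); apply/subsetP => z.
  rewrite /An_join !inE /atom_comp.
  by case: z => [[zz|]|] //=; rewrite /aR /aId ?eqxx ?orbT.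
case/Hj => // /Hone E.
by case: (fne E).
Qed.
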